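(* (a) Every connected Haar graph $\mathrm{Bi}(G,\emptyset,\emptyset,S)$ admits a partite presentation with exactly two vertex classes. (b) Conversely, if $P=\langle X\mid U\mid I\mid\phi\mid\mathcal R\rangle$ is a partite presentation with $X=\{0,1\}$ and $U=\emptyset$ (so every generator lies in $I$ and $\phi(s)$ swaps $0$ and $1$ for every generator $s$), then $\mathrm{PCay}(P)$ is a Haar graph, i.e. is isomorphic to $\mathrm{Bi}(G,\emptyset,\emptyset,T)$ for some group $G$ and $T\subseteq G$.
   Context: $\mathrm{Bi}(G,R,L,S)$, for $R=R^{-1},L=L^{-1},S\subseteq G$, has vertex set $\{(g)_0,(g)_1: g\in G\}$ and edges $\{(g)_0,(gr)_0\}$ ($r\in R$), $\{(g)_1,(gl)_1\}$ ($l\in L$), $\{(g)_0,(gs)_1\}$ ($s\in S$). A Haar graph is one of the form $\mathrm{Bi}(G,\emptyset,\emptyset,S)$. A partite presentation $P=\langle X\mid U\mid I\mid \phi\mid \mathcal R\rangle$ consists of: a nonempty set $X$; disjoint sets $U$, $I$ with $S':=U\cup I$; the group $MF_P:=\langle S'\mid s^2\ (s\in I)\rangle$; a map $\phi:S'\to\mathrm{Sym}(X)$ such that $\phi(s)$ is a fixed-point-free involution for each $s\in I$ and the $\phi(s)$ generate a subgroup acting transitively on $X$; and for each $x\in X$ a set $\mathcal R_x\subseteq MF_P$ of words $s_1\cdots s_n$ with $\phi(s_n)\circ\cdots\circ\phi(s_1)(x)=x$. The presentation graph $C(P)$ has vertex set $X$; for each $s\in U$ and $x\in X$ one edge from $x$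 to $\phi(s)(x)$ labelled $s$ in that direction and $s^{-1}$ in reverse; for each $s\in I$ and each pair $\{x,\phi(s)(x)\}$ one edge with both orientations labelled $s$. The presentation complex $\mathcal C(P)$ is $C(P)$ with, for every $x\in X$ and $r=s_1\cdots s_n\in\mathcal R_x$, a 2-cell attached along the closed walk from $x$ successively traversing the outgoing edges labelled $s_1,\dots,s_n$. $\mathrm{PCay}(P)$ is the 1-skeleton of the universal cover of $\mathcal C(P)$. *)

(* Defs.v *)
From Stdlib Require Import List Relations.
Import ListNotations.
Set Implicit Arguments.

Record Group := {
  gcar :> Type;
  gmul : gcar -> gcar -> gcar;
  gone : gcar;
  ginv : gcar -> gcar;
  gmulA : forall x y z, gmul x (gmul y z) = gmul (gmul x y) z;
  gmul1l : forall x, gmul gone x = x;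
  gmul1r : forall x, gmul x gone = x;
  gmulVl : forall x, gmul (ginv x) x = gone;
  gmulVr : forall x, gmul x (ginv x) = gone }.

Definition graph_iso (V1 V2 : Type) (adj1 : V1 -> V1 -> Prop)
  (adj2 : V2 -> V2 -> Prop) : Prop :=
  exists (f : V1 -> V2) (g : V2 -> V1),
    (forall x, g (f x) = x) /\ (forall y, f (g y) = y) /\
    (forall x y, adj1 x y <-> adj2 (f x) (f y)).

(* ---------- Haar graphs Bi(G, {}, {}, S) ----------
   vertex (g, false) = (g)_0, vertex (g, true) = (g)_1;
   edges {(g)_0, (gs)_1} for s in S. *)
Definition haar_adj (G : Group) (S : G -> Prop) (p q : G * bool) : Prop :=
  exists s, S s /\
    ((snd p = false /\ snd q = true /\ fst q = gmul G (fst p) s) \/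
     (snd p = true /\ snd q = false /\ fst p = gmul G (fst q) s)).

Definition haar_connected (G : Group) (S : G -> Prop) : Prop :=
  forall p q : G * bool, clos_refl_trans _ (@haar_adj G S) p q.

(* Letters of MF_P = < U + I | s^2 (s in I) >: u^{+1}, u^{-1} for u in U,
   and s for s in I (which is its own inverse). *)
Inductive letter (U I : Type) : Type :=
  | LU : U -> bool -> letter U I   (* true: u, false: u^{-1} *)
  | LI : I -> letter U I.

Definition linv (U I : Type) (a : letter U I) : letter U I :=
  match a with
  | LU _ u b => LU I u (negb b)
  | LI _ i => LI U i
  end.

Definition act1 (X U I : Type) (fU fUi : U -> X -> X) (fI : I -> X -> X)
  (a : letter U I) (x : X) : X :=
  match a with
  | LU _ u true => fU u x
  | LU _ u false => fUi u x
  | LI _ i => fI i x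
  end.

Fixpoint actw (X U I : Type) (fU fUi : U -> X -> X) (fI : I -> X -> X)
  (w : list (letter U I)) (x : X) : X :=
  match w with
  | [] => x
  | a :: w' => actw fU fUi fI w' (act1 fU fUi fI a x)
  end.

Record PartitePres (X : Type) := {
  pU : Type;
  pI : Type;
  phiU : pU -> X -> X;
  phiUi : pU -> X -> X;
  phiU_K : forall u x, phiUi u (phiU u x) = x;
  phiU_Ki : forall u x, phiU u (phiUi u x) = x;
  phiI : pI -> X -> X;
  phiI_invol : forall i x, phiI i (phiI i x) = x;
  phiI_fpf : forall i x, phiI i x <> x;
  X_nonempty : inhabited X;
  phi_transitive : forall x y : X, exists w, actw phiU phiUi phiI w x = y;
  rels : X -> list (letter pU pI) -> Prop;
  rels_closed : forall x r, rels x r -> actw phiU phiUi phiI r x = x }.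

Arguments pU {X}.
Arguments pI {X}.
Arguments rels {X}.

Definition pletter (X : Type) (P : PartitePres X) := letter (pU P) (pI P).

Definition pact (X : Type) (P : PartitePres X) (w : list (pletter P)) (x : X)
  : X := actw (phiU P) (phiUi P) (phiI P) w x.

(* Combinatorial homotopy of walks in the presentation complex starting at
   the base vertex x0: walks from x0 in C(P) correspond bijectively to words
   of letters; homotopy rel endpoints is generated by inserting backtracks
   a a^{-1} and boundaries of 2-cells (a relator r in R_y inserted at a point
   where the walk is at y). *)
Inductive htpy (X : Type) (P : PartitePres X) (x0 : X) :
    list (pletter P) -> list (pletter P) -> Prop :=
  | htpy_refl w : @htpy X P x0 w w
  | htpy_sym w v : @htpy X P x0 w v -> @htpy X P x0 v w
  | htpy_trans w v t : @htpy X P x0 w v -> @htpy X P x0 v t -> @htpy X P x0 w t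
  | htpy_back w1 w2 (a : pletter P) :
      @htpy X P x0 (w1 ++ w2) (w1 ++ a :: linv a :: w2)
  | htpy_rel w1 w2 r :
      rels P (@pact X P w1 x0) r -> @htpy X P x0 (w1 ++ w2) (w1 ++ r ++ w2).

(* Vertices of the universal cover of the presentation complex:
   homotopy classes of walks from x0. *)
Definition PCayV (X : Type) (P : PartitePres X) (x0 : X) : Type :=
  { A : list (pletter P) -> Prop |
    exists w, forall v, A v <-> @htpy X P x0 w v }.

(* Adjacency in the 1-skeleton PCay(P) of the universal cover: lifts of the
   edges of C(P). *)
Definition pcay_adj (X : Type) (P : PartitePres X) (x0 : X)
  (A B : PCayV P x0) : Prop :=
  exists w (a : pletter P), proj1_sig A w /\ proj1_sig B (w ++ [a]).

(* Main.v *)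
Require Import Defs.
From Stdlib Require Import List Relations ClassicalEpsilon FunctionalExtensionality PropExtensionality ProofIrrelevance Bool.
Import ListNotations.
Set Implicit Arguments.

Definition revinv (U I : Type) (w : list (letter U I)) := rev (map (@linv U I) w).

Lemma htpy_cancel (X : Type) (P : PartitePres X) (x0 : X) :
  forall w p v, htpy (P := P) x0 (p ++ w ++ revinv w ++ v) (p ++ v).
Proof.
  induction w as [|a w IH]; intros p v.
  - simpl. apply htpy_refl.
  - unfold revinv; simpl. fold (revinv w).
    replace (p ++ a :: w ++ (revinv w ++ [linv a]) ++ v)
      with ((p ++ [a]) ++ w ++ revinv w ++ (linv a :: v))
      by (rewrite <- !app_assoc; reflexivity).
    eapply htpy_trans. apply IH.
    rewrite <- app_assoc. simpl. apply htpy_sym. apply htpy_back.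
Qed.

Lemma pcay_ext (X : Type) (P : PartitePres X) (x0 : X) (A B : PCayV P x0) :
  (forall v, proj1_sig A v <-> proj1_sig B v) -> A = B.
Proof.
  destruct A as [a Ha], B as [b Hb]; simpl; intros H.
  assert (a = b) by (apply functional_extensionality; intro v;
                     apply propositional_extensionality; apply H).
  subst. f_equal. apply proof_irrelevance.
Qed.

Definition hstep (G : Group) (S : G -> Prop) (a : letter Empty_set {s | S s})
  (p : G * bool) : G * bool :=
  match a with
  | LU _ e _ => match e with end
  | LI _ s => if snd p then (gmul G (fst p) (ginv G (proj1_sig s)), false)
              else (gmul G (fst p) (proj1_sig s), true)
  end.

Fixpoint hwalk (G : Group) (S : G -> Prop) (w : list (letter Empty_set {s | S s}))
  (p : G * bool) : G * bool :=
  match w with [] => p | a :: w' => @hwalk G S w' (@hstep G S a p) end.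
Arguments hstep {G S}.
Arguments hwalk {G S}.

Definition efun (X : Type) (e : Empty_set) (x : X) : X := match e with end.

Definition haarP (G : Group) (S : G -> Prop) (Hne : exists s, S s) : PartitePres bool.
Proof.
  refine (@Build_PartitePres bool Empty_set {s | S s} (@efun bool) (@efun bool) _ _
           (fun _ b => negb b) _ _ (inhabits true) _
           (fun x r => forall g, hwalk r (g, x) = (g, x)) _).
  - intros [].
  - intros [].
  - intros; apply negb_involutive.
  - intros i [] ; discriminate.
  - intros x y. destruct Hne as [s Hs].
    destruct (Bool.bool_dec x y) as [e|n].
    + exists []. exact e.
    + exists [LI Empty_set (exist _ s Hs)]. simpl. destruct x, y; simpl; congruence.
  - intros x r H. specialize (H (gone G)).
    assert (K : forall w p, snd (hwalk w p) =
       actw (@efun bool) (@efun bool) (fun (_ : {s | S s}) b => negb b) w (snd p)).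
    { induction w as [|a w IH]; intros p; [reflexivity|].
      destruct a as [[]|s]. simpl. rewrite IH. f_equal.
      destruct p as [g []]; reflexivity. }
    transitivity (snd (hwalk r (gone G, x))); [symmetry; apply K|]. rewrite H. reflexivity.
Defined.
Arguments haarP {G S}.

Lemma hwalk_app G S (w v : list (letter Empty_set {s | S s})) p :
  @hwalk G S (w ++ v) p = hwalk v (hwalk w p).
Proof. revert p; induction w; simpl; auto. Qed.

Lemma hwalk_equiv G S (w : list (letter Empty_set {s | S s})) :
  forall g h b, @hwalk G S w (gmul G g h, b) =
    (gmul G g (fst (hwalk w (h, b))), snd (hwalk w (h, b))).
Proof.
  induction w as [|a w IH]; intros g h b; [reflexivity|].
  destruct a as [[]|s]. destruct b; simpl; rewrite <- gmulA; apply IH.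
Qed.

Lemma hstep_inv G S (a : letter Empty_set {s | S s}) p :
  @hstep G S (linv a) (hstep a p) = p.
Proof.
  destruct a as [[]|s]; destruct p as [g []]; simpl;
  rewrite <- gmulA; [rewrite gmulVl | rewrite gmulVr]; rewrite gmul1r; reflexivity.
Qed.

Lemma hwalk_revinv G S (w : list (letter Empty_set {s | S s})) :
  forall p, @hwalk G S (revinv w) (hwalk w p) = p.
Proof.
  induction w as [|a w IH]; intros p; [reflexivity|].
  unfold revinv; simpl; fold (revinv w). rewrite hwalk_app, IH. simpl.
  apply hstep_inv.
Qed.

Lemma hsnd G S (w : list (letter Empty_set {s | S s})) (Hne : exists s, S s) p :
  snd (@hwalk G S w p) = @pact bool (haarP Hne) w (snd p).
Proof.
  revert p; induction w as [|a w IH]; intros p; [reflexivity|].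
  destruct a as [[]|s]. simpl. rewrite IH. unfold pact. simpl. f_equal.
  destruct p as [g []]; reflexivity.
Qed.

Lemma htpy_end G S (Hne : exists s, S s) x0 (w v : list (letter Empty_set {s | S s})) :
  htpy (P := haarP Hne) x0 w v <-> @hwalk G S w (gone G, x0) = hwalk v (gone G, x0).
Proof.
  split.
  - induction 1.
    + reflexivity.
    + auto.
    + congruence.
    + rewrite !hwalk_app. simpl. rewrite hstep_inv. reflexivity.
    + rewrite !hwalk_app. f_equal.
      pose proof (@hsnd G S w1 Hne (gone G, x0)) as K; simpl in K; rewrite <- K in H.
      destruct (hwalk w1 (gone G, x0)) as [g b]. simpl in H. symmetry; apply H.
  - intros E.
    eapply htpy_trans.
    2:{ apply (htpy_cancel (haarP Hne) x0 w [] v). }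
    simpl.
    pose proof (htpy_rel (P := haarP Hne) x0 w [] (revinv w ++ v)) as R.
    rewrite app_nil_r in R. rewrite app_nil_r in R. apply R. clear R.
    simpl. intros g.
    pose proof (@hsnd G S w Hne (gone G, x0)) as K; simpl in K; rewrite <- K.
    destruct (hwalk w (gone G, x0)) as [h y] eqn:Eh. simpl.
    assert (C : hwalk (revinv w ++ v) (h, y) = (h, y)).
    { rewrite hwalk_app. rewrite <- Eh at 1. rewrite hwalk_revinv. symmetry; exact E. }
    assert (Eg : g = gmul G (gmul G g (ginv G h)) h)
      by (rewrite <- gmulA, gmulVl, gmul1r; reflexivity).
    rewrite Eg, hwalk_equiv, C. reflexivity.
Qed.

Lemma haar_step (G : Group) (S : G -> Prop) (p q : G * bool) :
  @haar_adj G S p q <-> exists a : letter Empty_set {s | S s}, hstep a p = q.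
Proof.
  split.
  - intros [s [Hs [[H1 [H2 H3]]|[H1 [H2 H3]]]]]; exists (LI _ (exist _ s Hs));
      destruct p as [g b], q as [h c]; simpl in *; subst; simpl.
    + reflexivity.
    + rewrite <- gmulA, gmulVr, gmul1r; reflexivity.
  - intros [[[]|[s Hs]] E]; exists s; split; [exact Hs|].
    destruct p as [g []], q as [h c]; simpl in *; inversion E; subst.
    + right; repeat split. rewrite <- gmulA, gmulVl, gmul1r; reflexivity.
    + left; repeat split.
Qed.

Lemma haar_reach (G : Group) (S : G -> Prop) (p q : G * bool) :
  clos_refl_trans _ (@haar_adj G S) p q -> exists w, @hwalk G S w p = q.
Proof.
  induction 1.
  - apply haar_step in H. destruct H as [a Ha]. exists [a]; exact Ha.
  - exists []; reflexivity.
  - destruct IHclos_refl_trans1 as [w1 H1], IHclos_refl_trans2 as [w2 H2].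
    exists (w1 ++ w2). rewrite hwalk_app; congruence.
Qed.

Lemma haar_nonempty (G : Group) (S : G -> Prop) (p q : G * bool) :
  clos_refl_trans _ (@haar_adj G S) p q -> p = q \/ exists s, S s.
Proof.
  induction 1.
  - right. destruct H as [s [Hs _]]; eauto.
  - left; reflexivity.
  - destruct IHclos_refl_trans1 as [->|]; auto.
Qed.

Definition fA (G : Group) (S : G -> Prop) (Hne : exists s, S s) x0 (A : PCayV (haarP Hne) x0) : G * bool :=
  @hwalk G S (proj1_sig (constructive_indefinite_description _ (proj2_sig A))) (gone G, x0).
Arguments fA {G S Hne x0}.

Lemma fA_char (G : Group) (S : G -> Prop) (Hne : exists s, S s) x0 (A : PCayV (haarP Hne) x0) v :
  proj1_sig A v <-> @hwalk G S v (gone G, x0) = fA A.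
Proof.
  unfold fA. destruct (constructive_indefinite_description _ (proj2_sig A)) as [w Hw].
  simpl. rewrite Hw, htpy_end. split; auto.
Qed.

Lemma gV_proof (G : Group) (S : G -> Prop) (Hne : exists s, S s) x0
  (gex : forall p, exists w, @hwalk G S w (gone G, x0) = p) p :
  exists w, forall v, hwalk v (gone G, x0) = p <-> htpy (P := haarP Hne) x0 w v.
Proof.
  destruct (gex p) as [w Hw]. exists w. intros v. rewrite htpy_end. split; congruence.
Qed.

Definition gV (G : Group) (S : G -> Prop) (Hne : exists s, S s) x0
  (gex : forall p, exists w, @hwalk G S w (gone G, x0) = p) (p : G * bool)
  : PCayV (haarP Hne) x0 :=
  exist _ (fun v => hwalk v (gone G, x0) = p) (@gV_proof G S Hne x0 gex p).
Arguments gV {G S} Hne {x0}.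

Lemma partA (G : Group) (S : G -> Prop) : @haar_connected G S ->
  exists P : PartitePres bool, forall x0 : bool,
    graph_iso (@pcay_adj bool P x0) (@haar_adj G S).
Proof.
  intros Hc.
  assert (Hne : exists s, S s).
  { destruct (haar_nonempty (Hc (gone G, false) (gone G, true))) as [E|]; auto.
    discriminate. }
  exists (haarP Hne). intros x0.
  assert (gex : forall p, exists w, @hwalk G S w (gone G, x0) = p)
    by (intros p; apply haar_reach, Hc).
  exists (@fA G S Hne x0), (gV Hne gex). split; [|split].
  - intros A. apply pcay_ext. intros v. simpl. rewrite fA_char. tauto.
  - intros p. destruct (gex p) as [w Hw].
    assert (H : proj1_sig (gV Hne gex p) w) by exact Hw.
    apply fA_char in H. congruence.
  - intros A B. split.
    + intros [w [a [HA HB]]]. apply fA_char in HA. apply fA_char in HB.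
      rewrite hwalk_app, HA in HB. simpl in HB. apply haar_step. eauto.
    + intros H. apply haar_step in H. destruct H as [a Ha].
      destruct (gex (fA A)) as [w Hw]. exists w, a. split.
      * apply fA_char; exact Hw.
      * apply fA_char. rewrite hwalk_app, Hw. simpl. exact Ha.
Qed.

Fixpoint ev (A : Type) (w : list A) : bool :=
  match w with [] => true | _ :: w' => negb (ev w') end.

Lemma ev_app (A : Type) (w v : list A) : ev (w ++ v) = if ev w then ev v else negb (ev v).
Proof.
  induction w as [|a w IH]; simpl; [reflexivity|]. rewrite IH.
  destruct (ev w), (ev v); reflexivity.
Qed.

Lemma actw_app (X U I : Type) fU fUi fI (w v : list (letter U I)) (x : X) :
  actw fU fUi fI (w ++ v) x = actw fU fUi fI v (actw fU fUi fI w x).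
Proof. revert x; induction w; simpl; auto. Qed.

Lemma linv_inv (U I : Type) (a : letter U I) : linv (linv a) = a.
Proof. destruct a as [u b|i]; simpl; [rewrite negb_involutive|]; reflexivity. Qed.

Lemma revinv_cons (U I : Type) (a : letter U I) w : revinv (a :: w) = revinv w ++ [linv a].
Proof. reflexivity. Qed.

Lemma revinv_app (U I : Type) (w v : list (letter U I)) : revinv (w ++ v) = revinv v ++ revinv w.
Proof. unfold revinv. rewrite map_app, rev_app_distr. reflexivity. Qed.

Lemma revinv_inv (U I : Type) (w : list (letter U I)) : revinv (revinv w) = w.
Proof.
  induction w as [|a w IH]; [reflexivity|].
  rewrite revinv_cons, revinv_app, IH. simpl. rewrite linv_inv. reflexivity.
Qed.

Lemma ev_revinv (U I : Type) (w : list (letter U I)) : ev (revinv w) = ev w.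
Proof.
  induction w as [|a w IH]; [reflexivity|].
  rewrite revinv_cons, ev_app, IH. simpl. destruct (ev w); reflexivity.
Qed.

Section PartB.
Variable P : PartitePres bool.
Variable HU : pU P -> False.
Variable x0 : bool.
Variable a0 : pI P.

Notation L := (pletter P).
Notation HT := (@htpy bool P x0).

Lemma phiI_neg i b : phiI P i b = negb b.
Proof.
  pose proof (@phiI_fpf bool P i b). destruct b, (phiI P i _) eqn:E; simpl in *; congruence.
Qed.

Lemma pact_par (w : list L) x : @pact bool P w x = if ev w then x else negb x.
Proof.
  revert x; induction w as [|a w IH]; intros x; [reflexivity|].
  destruct a as [u b|i]; [destruct (HU u)|].
  unfold pact in *; simpl. rewrite IH, phiI_neg.
  destruct (ev w), x; reflexivity.
Qed.

Lemma htpy_par w v : HT w v -> ev w = ev v.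
Proof.
  induction 1 as [|? ? ? ?|? ? ? ? ? ? ?|? ? ?|w1 w2 r Hr]; try congruence.
  - rewrite !ev_app. simpl. destruct (ev w2); reflexivity.
  - apply rels_closed in Hr.
    pose proof (pact_par r (@pact bool P w1 x0)) as K. unfold pact in K, Hr.
    rewrite Hr in K.
    assert (E : ev r = true).
    { unfold pletter in *. revert K. destruct (actw _ _ _ w1 x0); match goal with |- context[ev ?x] => destruct (ev x) end; simpl; congruence. }
    rewrite !ev_app, E. reflexivity.
Qed.

Lemma htpy_app_r w v u : HT w v -> HT (w ++ u) (v ++ u).
Proof.
  induction 1 as [|? ? ? ?|? ? ? ? ? ? ?|? ? ?|w1 w2 r Hr].
  - apply htpy_refl.
  - apply htpy_sym; auto.
  - eapply htpy_trans; eauto.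
  - rewrite <- !app_assoc. simpl. apply htpy_back.
  - rewrite <- !app_assoc. apply htpy_rel. exact Hr.
Qed.

Lemma htpy_app_l p w v : ev p = true -> HT w v -> HT (p ++ w) (p ++ v).
Proof.
  intros Ep. induction 1 as [|? ? ? ?|? ? ? ? ? ? ?|? ? ?|w1 w2 r Hr].
  - apply htpy_refl.
  - apply htpy_sym; auto.
  - eapply htpy_trans; eauto.
  - rewrite !app_assoc. apply htpy_back.
  - rewrite (app_assoc p w1 w2), (app_assoc p w1 (r ++ w2)). apply htpy_rel.
    unfold pact in *. rewrite actw_app. fold (@pact bool P p x0). rewrite pact_par, Ep.
    exact Hr.
Qed.

Lemma htpy_cong w w' v v' : ev w = true -> HT w w' -> HT v v' -> HT (w ++ v) (w' ++ v').
Proof.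
  intros E H1 H2. eapply htpy_trans. apply htpy_app_l; eauto. apply htpy_app_r; auto.
Qed.

Lemma back_end w (i : pI P) : HT w (w ++ [LI _ i; LI _ i]).
Proof.
  pose proof (htpy_back (P := P) x0 w [] (LI _ i)) as K.
  rewrite app_nil_r in K. exact K.
Qed.

Lemma cancel_end w v (i : pI P) : HT (w ++ [LI _ i]) (v ++ [LI _ i]) -> HT w v.
Proof.
  intros K. apply (htpy_app_r [LI _ i]) in K. rewrite <- !app_assoc in K.
  simpl in K.
  eapply htpy_trans. apply back_end. eapply htpy_trans. exact K.
  apply htpy_sym, back_end.
Qed.

Definition Gc := {A : list L -> Prop | exists w, ev w = true /\ forall v, A v <-> HT w v}.

Definition evz (w : list L) := if ev w then w else w ++ [LI _ a0].

Lemma evz_ev w : ev (evz w) = true.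
Proof.
  unfold evz. destruct (ev w) eqn:E; auto. rewrite ev_app, E. reflexivity.
Qed.

Lemma evz_even w : ev w = true -> evz w = w.
Proof. unfold evz; intros ->; reflexivity. Qed.

Definition cls (w : list L) : Gc :=
  exist _ (fun v => HT (evz w) v) (ex_intro _ (evz w) (conj (evz_ev w) (fun v => iff_refl _))).

Definition rep (A : Gc) : list L := proj1_sig (constructive_indefinite_description _ (proj2_sig A)).

Lemma rep_prop A : ev (rep A) = true /\ forall v, proj1_sig A v <-> HT (rep A) v.
Proof. unfold rep. destruct (constructive_indefinite_description _ _) as [w Hw]. exact Hw. Qed.

Lemma Gc_ext (A B : Gc) : (forall v, proj1_sig A v <-> proj1_sig B v) -> A = B.
Proof.
  destruct A as [a Ha], B as [b Hb]; simpl; intros K.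
  assert (a = b) by (apply functional_extensionality; intro v;
                     apply propositional_extensionality; apply K).
  subst. f_equal. apply proof_irrelevance.
Qed.

Lemma cls_rep A : cls (rep A) = A.
Proof.
  destruct (rep_prop A) as [E K]. apply Gc_ext. intros v. simpl.
  rewrite evz_even by exact E. rewrite K. tauto.
Qed.

Lemma cls_eq w v : HT (evz w) (evz v) -> cls w = cls v.
Proof.
  intros K. apply Gc_ext. intros u. simpl. split; intros K2.
  - eapply htpy_trans; [apply htpy_sym, K| exact K2].
  - eapply htpy_trans; [apply K| exact K2].
Qed.

Lemma cls_inj w v : cls w = cls v -> HT (evz w) (evz v).
Proof.
  intros E. assert (K : proj1_sig (cls w) (evz w)) by apply htpy_refl.
  rewrite E in K. apply htpy_sym, K.
Qed.

Lemma rep_cls w : HT (rep (cls w)) (evz w).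
Proof.
  destruct (rep_prop (cls w)) as [_ K]. apply htpy_sym.
  change (proj1_sig (cls w) (rep (cls w))). apply K. apply htpy_refl.
Qed.

Definition gm (A B : Gc) := cls (rep A ++ rep B).
Definition g1 := cls [].
Definition gi (A : Gc) := cls (revinv (rep A)).

Lemma gm_cls w v : ev w = true -> ev v = true -> gm (cls w) (cls v) = cls (w ++ v).
Proof.
  intros Ew Ev. unfold gm. apply cls_eq.
  rewrite !evz_even.
  - apply htpy_cong. apply (proj1 (rep_prop _)).
    eapply htpy_trans; [apply rep_cls|]; rewrite evz_even; [apply htpy_refl|auto].
    eapply htpy_trans; [apply rep_cls|]; rewrite evz_even; [apply htpy_refl|auto].
  - rewrite ev_app, Ew, Ev. reflexivity.
  - rewrite ev_app, (proj1 (rep_prop _)), (proj1 (rep_prop _)). reflexivity.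
Qed.

Lemma gmA x y z : gm x (gm y z) = gm (gm x y) z.
Proof.
  rewrite <- (cls_rep x), <- (cls_rep y), <- (cls_rep z).
  destruct (rep_prop x) as [Ex _], (rep_prop y) as [Ey _], (rep_prop z) as [Ez _].
  rewrite !gm_cls; auto; try (rewrite ev_app, ?Ex, ?Ey, ?Ez; reflexivity).
  rewrite app_assoc. reflexivity.
Qed.

Lemma gm1l x : gm g1 x = x.
Proof.
  rewrite <- (cls_rep x). unfold g1. rewrite gm_cls; auto. apply (proj1 (rep_prop x)).
Qed.

Lemma gm1r x : gm x g1 = x.
Proof.
  rewrite <- (cls_rep x). unfold g1. rewrite gm_cls; auto.
  rewrite app_nil_r. reflexivity. apply (proj1 (rep_prop x)).
Qed.

Lemma gmVl x : gm (gi x) x = g1.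
Proof.
  unfold gi. rewrite <- (cls_rep x) at 2. destruct (rep_prop x) as [Ex _].
  rewrite gm_cls; [|unfold pletter; rewrite ev_revinv; auto|auto].
  apply cls_eq. rewrite evz_even by (unfold pletter in *; rewrite ev_app, ev_revinv, Ex; reflexivity).
  pose proof (htpy_cancel P x0 (revinv (rep x)) [] []) as K.
  rewrite revinv_inv in K. simpl in K. rewrite app_nil_r in K. exact K.
Qed.

Lemma gmVr x : gm x (gi x) = g1.
Proof.
  unfold gi. rewrite <- (cls_rep x) at 1. destruct (rep_prop x) as [Ex _].
  rewrite gm_cls; [|auto|unfold pletter; rewrite ev_revinv; auto].
  apply cls_eq. rewrite evz_even by (unfold pletter in *; rewrite ev_app, ev_revinv, Ex; reflexivity).
  pose proof (htpy_cancel P x0 (rep x) [] []) as K.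
  simpl in K. rewrite app_nil_r in K. exact K.
Qed.

Definition GB : Group := {| gcar := Gc; gmul := gm; gone := g1; ginv := gi; gmulA := gmA; gmul1l := gm1l; gmul1r := gm1r; gmulVl := gmVl; gmulVr := gmVr |}.

Definition TB (g : GB) : Prop := exists i : pI P, g = cls [LI _ i; LI _ a0].

Definition repV (A : PCayV P x0) : list L :=
  proj1_sig (constructive_indefinite_description _ (proj2_sig A)).

Lemma repV_spec A v : proj1_sig A v <-> HT (repV A) v.
Proof. unfold repV. destruct (constructive_indefinite_description _ _) as [w Hw]. apply Hw. Qed.

Definition classV (w : list L) : PCayV P x0 :=
  exist _ (fun v => HT w v) (ex_intro _ w (fun v => iff_refl _)).

Lemma classV_rep A : classV (repV A) = A.
Proof. apply pcay_ext. intros v. simpl. rewrite repV_spec. tauto. Qed.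

Lemma classV_eq w v : HT w v -> classV w = classV v.
Proof.
  intros K. apply pcay_ext. intros u. simpl. split; intros K2.
  - eapply htpy_trans; [apply htpy_sym, K| exact K2].
  - eapply htpy_trans; [apply K| exact K2].
Qed.

Lemma repV_classV w : HT (repV (classV w)) w.
Proof.
  apply (proj1 (repV_spec (classV w) w)). apply htpy_refl.
Qed.

Definition Fw (w : list L) : GB * bool := (cls w, negb (ev w)).
Definition FV (A : PCayV P x0) : GB * bool := Fw (repV A).

Lemma Fw_eq w v : HT w v -> Fw w = Fw v.
Proof.
  intros K. pose proof (htpy_par K) as E. unfold Fw. rewrite E. f_equal.
  apply cls_eq. unfold evz. rewrite E. destruct (ev v); auto. apply htpy_app_r; auto.
Qed.

Lemma FV_classV w : FV (classV w) = Fw w.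
Proof. apply Fw_eq, repV_classV. Qed.

Definition GV (p : GB * bool) : PCayV P x0 :=
  if snd p then classV (rep (fst p) ++ [LI _ a0]) else classV (rep (fst p)).

Lemma GV_Fw w : GV (Fw w) = classV w.
Proof.
  unfold GV, Fw; simpl. destruct (ev w) eqn:E; simpl; apply classV_eq.
  - eapply htpy_trans. apply rep_cls. rewrite evz_even by exact E. apply htpy_refl.
  - eapply htpy_trans. apply htpy_app_r, rep_cls. unfold evz; rewrite E.
    rewrite <- app_assoc. apply htpy_sym, back_end.
Qed.

Lemma FV_GV p : FV (GV p) = p.
Proof.
  destruct p as [g b]. destruct (rep_prop g) as [Eg _]. unfold GV; simpl.
  destruct b; rewrite FV_classV; unfold Fw.
  - rewrite ev_app, Eg. simpl. f_equal. rewrite <- (cls_rep g) at 2.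
    apply cls_eq. unfold evz. rewrite ev_app, Eg. simpl. rewrite <- app_assoc.
    apply htpy_sym, back_end.
  - rewrite Eg, cls_rep. reflexivity.
Qed.

Lemma adj_classV a b : pcay_adj (classV a) (classV b) <-> exists l, HT b (a ++ [l]).
Proof.
  split.
  - intros [u [l [Ha Hb]]]. simpl in Ha, Hb. exists l.
    eapply htpy_trans. exact Hb. apply htpy_app_r, htpy_sym, Ha.
  - intros [l K]. exists a, l. split; simpl. apply htpy_refl. exact K.
Qed.

Lemma ev_i i : ev [LI (pU P) i; LI _ a0] = true.
Proof. reflexivity. Qed.

Lemma adj_Fw (a b : list L) : @haar_adj GB TB (Fw a) (Fw b) <-> exists l, HT b (a ++ [l]).
Proof.
  split.
  - intros [s [[i ->] [[H1 [H2 H3]]|[H1 [H2 H3]]]]]; simpl in *; exists (LI _ i).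
    + apply negb_false_iff in H1. apply negb_true_iff in H2.
      change (cls b = gm (cls a) (cls [LI _ i; LI _ a0])) in H3.
      rewrite gm_cls in H3 by auto. apply cls_inj in H3.
      unfold evz in H3. rewrite H2, ev_app, H1 in H3. simpl in H3.
      apply cancel_end with (i := a0). rewrite <- app_assoc. exact H3.
    + apply negb_true_iff in H1. apply negb_false_iff in H2.
      change (cls a = gm (cls b) (cls [LI _ i; LI _ a0])) in H3.
      rewrite gm_cls in H3 by auto. apply cls_inj in H3.
      unfold evz in H3. rewrite H1, ev_app, H2 in H3. simpl in H3.
      replace (b ++ [LI _ i; LI _ a0]) with ((b ++ [LI _ i]) ++ [LI _ a0]) in H3
        by (rewrite <- app_assoc; reflexivity).
      apply cancel_end in H3. apply (htpy_app_r [LI _ i]) in H3.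
      rewrite <- app_assoc in H3. simpl in H3.
      apply htpy_sym. eapply htpy_trans. exact H3. apply htpy_sym, back_end.
  - intros [[u|i] K]; [destruct (HU u)|].
    pose proof (htpy_par K) as Eb. rewrite ev_app in Eb. simpl in Eb.
    exists (cls [LI _ i; LI _ a0]). split; [exists i; reflexivity|].
    unfold Fw; simpl. destruct (ev a) eqn:Ea; simpl in Eb.
    + left. rewrite Eb. repeat split.
      change (cls b = gm (cls a) (cls [LI _ i; LI _ a0])).
      rewrite gm_cls by auto. apply cls_eq.
      unfold evz. unfold pletter in *. rewrite Eb, ev_app, Ea. simpl.
      replace (a ++ [LI _ i; LI _ a0]) with ((a ++ [LI _ i]) ++ [LI _ a0])
        by (rewrite <- app_assoc; reflexivity).
      apply htpy_app_r, K.
    + right. rewrite Eb. repeat split.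
      change (cls a = gm (cls b) (cls [LI _ i; LI _ a0])).
      rewrite gm_cls by auto. apply cls_eq.
      unfold evz. unfold pletter in *. rewrite Ea, ev_app, Eb. simpl.
      replace (b ++ [LI _ i; LI _ a0]) with ((b ++ [LI _ i]) ++ [LI _ a0])
        by (rewrite <- app_assoc; reflexivity).
      apply htpy_app_r.
      apply (htpy_app_r [LI _ i]) in K. rewrite <- app_assoc in K. simpl in K.
      eapply htpy_trans. apply back_end. apply htpy_sym, K.
Qed.

Lemma partB_iso : graph_iso (@pcay_adj bool P x0) (@haar_adj GB TB).
Proof.
  exists FV, GV. split; [|split].
  - intros A. unfold FV. rewrite GV_Fw. apply classV_rep.
  - apply FV_GV.
  - intros A B. rewrite <- (classV_rep A), <- (classV_rep B).
    rewrite !FV_classV, adj_classV, adj_Fw. tauto.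
Qed.

End PartB.

Lemma partB (P : PartitePres bool) : (pU P -> False) -> forall x0 : bool,
  exists (G : Group) (T : G -> Prop), graph_iso (@pcay_adj bool P x0) (@haar_adj G T).
Proof.
  intros HU x0.
  destruct (phi_transitive P x0 (negb x0)) as [[|[u b|i] w] Hw].
  - simpl in Hw. destruct x0; discriminate.
  - destruct (HU u).
  - exists (@GB P HU x0 i), (@TB P HU x0 i). apply partB_iso.
Qed.

Theorem corollary4 :
  (forall (G : Group) (S : G -> Prop),
      @haar_connected G S ->
      exists P : PartitePres bool,
        forall x0 : bool,
          graph_iso (@pcay_adj bool P x0) (@haar_adj G S))
  /\
  (forall P : PartitePres bool,
      (pU P -> False) ->
      forall x0 : bool,
        exists (G : Group) (T : G -> Prop),
          graph_iso (@pcay_adj bool P x0) (@haar_adj G T)).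
Proof.
  split.
  - exact partA.
  - exact partB.
Qed.
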